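(* Let $(G,\sigma)$ be a connection graph. For any distinct $i,j\in V$, $r^\sigma_{ij}\le r_{ij}$.
   Context: A connection graph $(G,\sigma)$: finite connected weighted graph $G=(V,E,W)$, $V=\{1,\dots,n\}$, $w_{xy}>0$ iff $\{x,y\}\in E$, $\deg(x)=\sum_yw_{xy}$, and a $d$-dimensional signature $\sigma$ mapping oriented edges to $\mathsf{O}(d)$ with $\sigma_{yx}=\sigma_{xy}^{\mathrm T}$. $r_{ij}=(e_i-e_j)^{\mathrm T}L^\dagger(e_i-e_j)$ is the classical effective resistance, $L=D-W$. Connection Laplacian $\mathcal{L}$: $nd\times nd$ block matrix with blocks $\deg(x)I_d$ on the diagonal, $-w_{xy}\sigma_{xy}$ for $x\sim y$, $0$ otherwise. $\Omega^0_{ij}=\mathbb{E}[\prod_{\ell=1}^{T^0_j}\sigma_{X_{\ell-1}X_\ell}\mid X_0=i]$ for the simple random walk with transition probabilities $w_{xy}/\deg(x)$ and $T^0_j=\inf\{t\ge0:X_t=j\}$. $N_{ij}$: $nd\times d$ block column with $I_d$ at node $i$, $-(\Omega^0_{ij})^{\mathrm T}$ at node $j$, $0$ elsewhere; $\mathcal{W}_{i\to j}=\mathcal{L}^\dagger N_{ij}$. Connection effective resistance: $r^\sigma_{ij}=\frac{1}{2d}\operatorname{Tr}\big(\mathcal{W}_{i\to j}^{\mathrm T}\mathcal{L}\mathcal{W}_{i\to j}+\mathcal{W}_{j\to i}^{\mathrm T}\mathcal{L}\mathcal{W}_{j\to i}\big)$. *)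

(* Defs.v *)
From HB Require Import structures.
From mathcomp Require Import all_boot all_order all_algebra.
From mathcomp Require Import boolp classical_sets reals topology normedtype sequences.
Set Implicit Arguments. Unset Strict Implicit. Unset Printing Implicit Defensive.
Import Order.TTheory GRing.Theory Num.Theory.
Import numFieldNormedType.Exports.
Local Open Scope ring_scope.

Section ConnectionGraph.
Variable R : realType.

Definition moore_penrose m k (A : 'M[R]_(m, k)) (X : 'M[R]_(k, m)) : Prop :=
  [/\ A *m X *m A = A, X *m A *m X = X,
      (A *m X)^T = A *m X & (X *m A)^T = X *m A].

(* The Moore--Penrose pseudo-inverse (it exists and is unique over the reals). *)
Definition pinv m k (A : 'M[R]_(m, k)) : 'M[R]_(k, m) :=
  xget 0 (fun X => moore_penrose A X).

Variables (n d : nat) (w : 'M[R]_n) (sigma : 'I_n -> 'I_n -> 'M[R]_d).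

Definition deg (x : 'I_n) : R := \sum_(y < n) w x y.

Definition adj : rel 'I_n := fun x y => 0 < w x y.

Definition laplacian : 'M[R]_n := \matrix_(x, y) ((x == y)%:R * deg x - w x y).

Definition eff_res (i j : 'I_n) : R :=
  let e : 'cV[R]_n := delta_mx i ord0 - delta_mx j ord0 in
  (e^T *m pinv laplacian *m e) ord0 ord0.

(* block-vector / block-matrix index type: 'M_(\sum_(x < n) d, ...) *)
Notation nd := (\sum_(x < n) d)%N.

Definition conn_laplacian : 'M[R]_(nd, nd) :=
  \mxblock_(x < n, y < n)
     (if x == y then deg x *: (1%:M : 'M[R]_d) else - (w x y *: sigma x y)).

(* A walk of length t is a function p : 'I_t.+1 -> 'I_n, p k = X_k. *)
Definition walk_step t (p : {ffun 'I_t.+1 -> 'I_n}) (k : nat) : 'I_n * 'I_n :=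
  (p (inord k), p (inord k.+1)).

Definition walk_prob t (p : {ffun 'I_t.+1 -> 'I_n}) : R :=
  \prod_(k < t) (let e := walk_step p k in w e.1 e.2 / deg e.1).

Definition walk_sigma t (p : {ffun 'I_t.+1 -> 'I_n}) : 'M[R]_d :=
  foldr (fun k acc => (let e := walk_step p k in sigma e.1 e.2) *m acc)
        1%:M (iota 0 t).

(* first-passage walks from i to j of length t: X_0 = i, X_t = j,
   X_k <> j for k < t (so that T^0_j = t) *)
Definition first_passage (i j : 'I_n) t (p : {ffun 'I_t.+1 -> 'I_n}) : bool :=
  [&& p ord0 == i, p ord_max == j & [forall k : 'I_t.+1, (k < t)%N ==> (p k != j)]].

(* E[ prod_{l=1}^{T} sigma ; T = t | X_0 = i ] *)
Definition omega_term (i j : 'I_n) (t : nat) : 'M[R]_d :=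
  \sum_(p : {ffun 'I_t.+1 -> 'I_n} | first_passage i j p) walk_prob p *: walk_sigma p.

Definition Omega0 (i j : 'I_n) : 'M[R]_d :=
  \matrix_(a, b) limn (series (fun t => omega_term i j t a b)).

Definition Nmat (i j : 'I_n) : 'M[R]_(nd, d) :=
  \mxcol_(x < n) (if x == i then 1%:M
                  else if x == j then - (Omega0 i j)^T else 0).

Definition Wmat (i j : 'I_n) : 'M[R]_(nd, d) := pinv conn_laplacian *m Nmat i j.

Definition conn_eff_res (i j : 'I_n) : R :=
  (2 * d%:R)^-1 * \tr ((Wmat i j)^T *m conn_laplacian *m Wmat i j
                      + (Wmat j i)^T *m conn_laplacian *m Wmat j i).

End ConnectionGraph.

Definition connection_graph (R : realType) (n d : nat) (w : 'M[R]_n)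
  (sigma : 'I_n -> 'I_n -> 'M[R]_d) : Prop :=
  (forall x y, w x y = w y x) /\
  (forall x y, 0 <= w x y) /\
  (forall x, w x x = 0) /\
  (forall x y, connect (adj w) x y) /\
  (forall x y, 0 < w x y -> (sigma x y)^T *m sigma x y = 1%:M) /\
  (forall x y, 0 < w x y -> sigma y x = (sigma x y)^T).

(* Main.v *)
Require Import Defs.
From HB Require Import structures.
From mathcomp Require Import all_boot all_order all_algebra.
From mathcomp Require Import boolp classical_sets reals topology normedtype sequences.
From mathcomp Require Import ring lra.
Import Order.TTheory GRing.Theory Num.Theory.
Import numFieldNormedType.Exports.
Local Open Scope ring_scope.

Set Implicit Arguments. Unset Strict Implicit. Unset Printing Implicit Defensive.

Section MP.
Variable R : realType.

Lemma rv_sq0 q (u : 'rV[R]_q) : u *m u^T = 0 -> u = 0.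
Proof.
move=> /matrixP /(_ ord0 ord0); rewrite !mxE => H.
have H2 : forall k, k \in predT -> u ord0 k * u ord0 k = 0.
  apply/psumr_eq0P => [k _|]; first by rewrite -expr2 sqr_ge0.
  by rewrite -[RHS]H; apply: eq_bigr => k _; rewrite mxE.
apply/matrixP => a b; rewrite ord1 mxE.
by have /eqP := H2 b isT; rewrite mulf_eq0 orbb => /eqP.
Qed.

Lemma kerMMt p q (M : 'M[R]_(p, q)) (v : 'rV_p) : v *m M *m M^T = 0 -> v *m M = 0.
Proof.
move=> H; apply: rv_sq0.
by rewrite trmx_mul mulmxA H mul0mx.
Qed.

Lemma mp_exists_fact m k r (B : 'M[R]_(m, r)) (C : 'M[R]_(r, k)) :
  B^T *m B \in unitmx -> C *m C^T \in unitmx ->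
  exists X, moore_penrose (B *m C) X.
Proof.
move=> uB uC.
exists (C^T *m invmx (C *m C^T) *m invmx (B^T *m B) *m B^T).
have E1 : B *m C *m (C^T *m invmx (C *m C^T) *m invmx (B^T *m B) *m B^T)
          = B *m invmx (B^T *m B) *m B^T.
  by rewrite -!mulmxA (mulmxA C) (mulmxA (C *m C^T)) mulmxV // mul1mx.
have E2 : (C^T *m invmx (C *m C^T) *m invmx (B^T *m B) *m B^T) *m (B *m C)
          = C^T *m invmx (C *m C^T) *m C.
  by rewrite -!mulmxA (mulmxA B^T) (mulmxA (invmx (B^T *m B))) mulVmx // mul1mx.
split.
- by rewrite E1 -!mulmxA (mulmxA B^T) (mulmxA (invmx (B^T *m B))) mulVmx // mul1mx.
- by rewrite E2 -!mulmxA (mulmxA C) (mulmxA (invmx (C *m C^T))) mulVmx // mul1mx.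
- by rewrite E1 !trmx_mul trmxK trmx_inv trmx_mul trmxK mulmxA.
- by rewrite E2 !trmx_mul trmxK trmx_inv trmx_mul trmxK mulmxA.
Qed.

Lemma mp_exists m k (A : 'M[R]_(m, k)) : exists X, moore_penrose A X.
Proof.
set B := col_base A; set C := row_base A.
have AE : B *m C = A by rewrite mulmx_base.
have uB : B^T *m B \in unitmx.
  rewrite -row_free_unit; apply: inj_row_free => v.
  rewrite mulmxA -{2}[B]trmxK => /kerMMt /eqP; rewrite mulmx_free_eq0 => [/eqP //|].
  by rewrite /row_free mxrank_tr; have := col_base_full A.
have uC : C *m C^T \in unitmx.
  rewrite -row_free_unit; apply: inj_row_free => v.
  rewrite mulmxA => /kerMMt /eqP; rewrite mulmx_free_eq0 => [/eqP //|].
  exact: row_base_free.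
by have := mp_exists_fact uB uC; rewrite AE.
Qed.

Lemma pinvP m k (A : 'M[R]_(m, k)) : moore_penrose A (pinv A).
Proof. by have [X HX] := mp_exists A; exact: (xgetI 0 HX). Qed.

End MP.

Section Gen.
Variable R : realType.

Lemma quad_le (p q s : R) : 0 <= s ->
  (forall t, 0 <= p - 2 * t * q + t ^+ 2 * s) -> q ^+ 2 <= p * s.
Proof.
move=> s0 H; have [s_gt0|] := ltP 0 s.
  have := H (q / s); rewrite expr2.
  have -> : p - 2 * (q / s) * q + q / s * (q / s) * s = p - q * q / s.
    by field; rewrite gt_eqF.
  rewrite subr_ge0 ler_pdivrMr // => h; by rewrite expr2 mulrC.
move=> sle; have s00 : s = 0 by apply/le_anti; rewrite sle s0.
have [->|qn0] := eqVneq q 0; first by rewrite expr2 mul0r s00 mulr0.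
have := H ((p + 1) / (2 * q)); rewrite s00 mulr0 addr0.
have -> : 2 * ((p + 1) / (2 * q)) * q = p + 1.
  by field.
lra.
Qed.

Lemma wCS (I : finType) (c a b : I -> R) : (forall k, 0 <= c k) ->
  (\sum_k c k * a k * b k) ^+ 2 <=
  (\sum_k c k * a k ^+ 2) * (\sum_k c k * b k ^+ 2).
Proof.
move=> c0; apply: quad_le; first by apply: sumr_ge0 => k _; rewrite mulr_ge0 // sqr_ge0.
move=> t.
have -> : (\sum_k c k * a k ^+ 2) - 2 * t * (\sum_k c k * a k * b k)
            + t ^+ 2 * (\sum_k c k * b k ^+ 2)
          = \sum_k c k * (a k - t * b k) ^+ 2.
  rewrite !mulr_sumr -sumrN -!big_split /=; apply: eq_bigr => k _; ring.
by apply: sumr_ge0 => k _; rewrite mulr_ge0 // sqr_ge0.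
Qed.

Lemma kato_scalar (A B C : R) : 0 <= A -> 0 <= C -> B ^+ 2 <= A * C ->
  (Num.sqrt A - Num.sqrt C) ^+ 2 <= A - 2 * B + C.
Proof.
move=> A0 C0 hB.
have hb : B <= Num.sqrt A * Num.sqrt C.
  rewrite -sqrtrM //; apply: (le_trans (ler_norm B)).
  by rewrite -sqrtr_sqr ler_sqrt // ?mulr_ge0.
rewrite sqrrB !sqr_sqrtr //; lra.
Qed.

Lemma range_sym m (A : 'M[R]_m) (X : 'M[R]_m) (b : 'cV[R]_m) :
  A^T = A -> moore_penrose A X ->
  (forall v : 'cV_m, A *m v = 0 -> v^T *m b = 0) -> A *m (X *m b) = b.
Proof.
move=> As [H1 H2 H3 H4] Hb.
have AXtA : A *m X^T *m A = A.
  by rewrite -{1}As -{2}As -trmx_mul -trmx_mul mulmxA H1 As.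
have AAX : A *m A *m X = A.
  by rewrite -mulmxA -H3 trmx_mul As mulmxA AXtA.
set v := b - A *m (X *m b).
have Av : A *m v = 0 by rewrite /v mulmxBr !mulmxA AAX subrr.
have vb := Hb v Av.
have vA : v^T *m A = 0 by rewrite -As -trmx_mul Av trmx0.
have : v^T *m v = 0.
  by rewrite {2}/v mulmxBr vb (mulmxA v^T) vA mul0mx subrr.
move=> h; have : v^T = 0 by apply: rv_sq0; rewrite trmxK.
move=> /(congr1 trmx); rewrite trmxK trmx0 => /eqP; rewrite /v subr_eq0 => /eqP.
by move=> <-.
Qed.

Lemma mp_quad m k (A X : 'M[R]_m) (U : 'M[R]_(m, k)) :
  A^T = A -> moore_penrose A X ->
  (X *m (A *m U))^T *m A *m (X *m (A *m U)) = U^T *m A *m U.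
Proof.
move=> As [H1 H2 H3 H4].
have AXtA : A *m X^T *m A = A.
  by rewrite -{1}As -{2}As -trmx_mul -trmx_mul mulmxA H1 As.
rewrite !trmx_mul As !mulmxA.
have E1 : U^T *m A *m X^T *m A = U^T *m A by rewrite -!mulmxA (mulmxA A) AXtA.
have E2 : U^T *m A *m X *m A = U^T *m A by rewrite -!mulmxA (mulmxA A) H1.
by rewrite E1 E2.
Qed.

Lemma trMtM_ge0 p q (M : 'M[R]_(p, q)) a : 0 <= (M^T *m M) a a.
Proof. by rewrite mxE; apply: sumr_ge0 => b _; rewrite mxE -expr2 sqr_ge0. Qed.

Lemma trMtM_sum p q (M : 'M[R]_(p, q)) a : (M^T *m M) a a = \sum_b M b a ^+ 2.
Proof. by rewrite mxE; apply: eq_bigr => b _; rewrite mxE expr2. Qed.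

Lemma tr_MtM_eq0 p q (M : 'M[R]_(p, q)) : \tr (M^T *m M) = 0 -> M = 0.
Proof.
move=> h; apply/matrixP => b a; rewrite mxE.
have h1 : (M^T *m M) a a = 0.
  by apply: (psumr_eq0P _ h) => // x; rewrite trMtM_ge0.
rewrite trMtM_sum in h1.
have h2 := psumr_eq0P (fun x _ => sqr_ge0 (M x a)) h1.
by apply/eqP; rewrite -sqrf_eq0 h2.
Qed.

End Gen.

Lemma mp_quad2 (R : realType) m k (A X : 'M[R]_m) (U : 'M[R]_(m, k)) :
  A^T = A -> moore_penrose A X ->
  (A *m U)^T *m X *m (A *m U) = U^T *m A *m U.
Proof.
move=> As [H1 _ _ _].
have E : U^T *m A *m X *m A = U^T *m A by rewrite -!mulmxA (mulmxA A) H1.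
by rewrite trmx_mul As !mulmxA E.
Qed.

Section Classical.
Variables (R : realType) (n : nat) (w : 'M[R]_n).
Hypothesis wsym : forall x y, w x y = w y x.
Hypothesis wge0 : forall x y, 0 <= w x y.
Hypothesis conn : forall x y, connect (adj w) x y.

Lemma conn_ind (P : 'I_n -> Prop) a b :
  (forall x y, 0 < w x y -> P x -> P y) -> P a -> P b.
Proof.
move=> step Pa; have /connectP [p pth ->] := conn a b.
elim: p a Pa pth => [|y p IH] a Pa //= /andP [ay pth].
by apply: (IH y) => //; apply: step ay Pa.
Qed.

Definition En (f g : 'I_n -> R) :=
  \sum_x \sum_y w x y * (f x - f y) * (g x - g y).

Lemma En_sq f : En f f = \sum_x \sum_y w x y * (f x - f y) ^+ 2.
Proof. by apply: eq_bigr => x _; apply: eq_bigr => y _; rewrite expr2 mulrA. Qed.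

Lemma En_ge0 f : 0 <= En f f.
Proof.
by rewrite En_sq; apply: sumr_ge0 => x _; apply: sumr_ge0 => y _;
  rewrite mulr_ge0 // sqr_ge0.
Qed.

Lemma En_CS f g : En f g ^+ 2 <= En f f * En g g.
Proof.
rewrite /En !pair_big /=.
have := @wCS R _ (fun p : 'I_n * 'I_n => w p.1 p.2) (fun p => f p.1 - f p.2)
  (fun p => g p.1 - g p.2) (fun p => wge0 p.1 p.2).
congr (_ <= _ * _); apply: eq_bigr => p _; by rewrite expr2 mulrA.
Qed.

Lemma En_eq0 f : En f f = 0 -> forall x y, 0 < w x y -> f x = f y.
Proof.
rewrite En_sq => h x y wxy.
have h1 : forall x, \sum_y w x y * (f x - f y) ^+ 2 = 0.
  move=> x'; apply: (psumr_eq0P _ h) => // z _.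
  by apply: sumr_ge0 => y' _; rewrite mulr_ge0 // sqr_ge0.
have h2 := psumr_eq0P (fun y' _ => mulr_ge0 (wge0 x y') (sqr_ge0 (f x - f y'))) (h1 x).
move: (h2 y isT) => /eqP; rewrite mulf_eq0 gt_eqF //= sqrf_eq0 subr_eq0 => /eqP //.
Qed.

Lemma lap_row x (g : 'I_n -> R) :
  \sum_y laplacian w x y * g y = deg w x * g x - \sum_y w x y * g y.
Proof.
under eq_bigr do rewrite mxE mulrBl.
rewrite sumrB (bigD1 x) //= eqxx mul1r big1 ?addr0 // => y /negbTE.
by rewrite eq_sym => ->; rewrite !mul0r.
Qed.

Lemma lap_sym : (laplacian w)^T = laplacian w.
Proof. by apply/matrixP => x y; rewrite !mxE eq_sym (wsym x y); case: (eqVneq x y) => [->|_]; rewrite ?mul0r. Qed.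

Lemma lap_form (f g : 'cV[R]_n) :
  2 * (f^T *m laplacian w *m g) 0 0 = En (fun x => f x 0) (fun x => g x 0).
Proof.
set F := fun x => f x 0; set G := fun x => g x 0.
have LHS : (f^T *m laplacian w *m g) 0 0 =
    \sum_x F x * (deg w x * G x - \sum_y w x y * G y).
  rewrite -mulmxA mxE; apply: eq_bigr => x _; rewrite !mxE; congr (_ * _).
  by rewrite -lap_row; apply: eq_bigr => y _; rewrite mxE.
set T := fun x y => w x y * F x * (G x - G y).
have RHS : En F G = \sum_x \sum_y T x y + \sum_x \sum_y T y x.
  rewrite -big_split /=; apply: eq_bigr => x _; rewrite -big_split /=.
  by apply: eq_bigr => y _; rewrite /T wsym; ring.
rewrite RHS [X in _ + X]exchange_big /= LHS mulr2n mulrDl mul1r; congr (_ + _);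
  by apply: eq_bigr => x _; rewrite /T /deg mulr_suml -sumrB mulr_sumr; apply: eq_bigr => y _; ring.
Qed.

Lemma eff_res_bound (i j : 'I_n) (f : 'I_n -> R) :
  0 <= eff_res w i j /\ 2 * (f i - f j) ^+ 2 <= eff_res w i j * En f f.
Proof.
set L := laplacian w; set X := pinv L.
set e : 'cV[R]_n := delta_mx i ord0 - delta_mx j ord0.
have mpX : moore_penrose L X := pinvP L.
have eT : forall v : 'cV[R]_n, (v^T *m e) 0 0 = v i 0 - v j 0.
  by move=> v; rewrite mulmxBr -!colE !mxE.
have Lsym : L^T = L := lap_sym.
have Le : L *m (X *m e) = e.
  apply: range_sym => // v Lv.
  apply/matrixP => a b; rewrite !ord1 eT mxE.
  have := lap_form v v; rewrite -mulmxA Lv mulmx0 mxE mulr0 => /esym h.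
  have hv := En_eq0 h.
  have : v j 0 = v i 0.
    by apply: (@conn_ind (fun x => v x 0 = v i 0) i j) => // x y /hv /= <-.
  by move=> ->; rewrite subrr.
set u0 := X *m e.
have reff : eff_res w i j = (u0^T *m L *m u0) 0 0.
  have -> : eff_res w i j = (e^T *m X *m e) 0 0 by [].
  by rewrite -Le mp_quad2.
set F : 'cV[R]_n := \col_x f x.
have Ff : forall x, F x 0 = f x by move=> x; rewrite mxE.
have En_ext : forall f1 f2 g1 g2, (forall x, f1 x = f2 x) -> (forall x, g1 x = g2 x) ->
    En f1 g1 = En f2 g2.
  by move=> f1 f2 g1 g2 hf hg; apply: eq_bigr => x _; apply: eq_bigr => y _; rewrite !hf !hg.
have hr : 2 * eff_res w i j = En (fun x => u0 x 0) (fun x => u0 x 0) by rewrite reff lap_form.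
have ha : 2 * (f i - f j) = En f (fun x => u0 x 0).
  rewrite -(En_ext _ _ _ _ Ff (fun x => erefl)) -lap_form -Ff -Ff -eT -Le.
  by rewrite -(mulmxA F^T) (mulmxA F^T).
have hCS := En_CS f (fun x => u0 x 0).
have hP := En_ge0 f; have hQ := En_ge0 (fun x => u0 x 0).
move: hr ha hCS hP hQ.
set a := f i - f j; set B := En f _; set P := En f f; set Q := En _ _; set r := eff_res w i j.
move=> hr ha hCS hP hQ; split; first lra.
rewrite -hr -ha in hCS; nra.
Qed.


End Classical.

Section Conn.
Variables (R : realType) (n d : nat) (w : 'M[R]_n) (sigma : 'I_n -> 'I_n -> 'M[R]_d).
Hypothesis wsym : forall x y, w x y = w y x.
Hypothesis wge0 : forall x y, 0 <= w x y.
Hypothesis w0 : forall x, w x x = 0.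
Hypothesis orth : forall x y, 0 < w x y -> (sigma x y)^T *m sigma x y = 1%:M.
Hypothesis sigsym : forall x y, 0 < w x y -> sigma y x = (sigma x y)^T.

Notation nd := (\sum_(x < n) d)%N.
Notation CL := (conn_laplacian w sigma).

Definition Lb (x y : 'I_n) : 'M[R]_d :=
  if x == y then deg w x *: 1%:M else - (w x y *: sigma x y).

Definition blk k (V : 'M[R]_(nd, k)) (x : 'I_n) : 'M[R]_(d, k) :=
  @submxcol _ _ (fun _ => d) k V x.

Lemma CL_blk k (V : 'M[R]_(nd, k)) x :
  blk (CL *m V) x = \sum_y Lb x y *m blk V y.
Proof.
by rewrite /blk -{1}[V]submxcolK /conn_laplacian mul_mxblock_mxrow mxcolK.
Qed.

Lemma tr_blk k l (V : 'M[R]_(nd, k)) (W : 'M[R]_(nd, l)) :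
  V^T *m W = \sum_x (blk V x)^T *m blk W x.
Proof.
by rewrite /blk -{1}[V]submxcolK -{1}[W]submxcolK tr_mxcol mul_mxrow_mxcol.
Qed.

Lemma trmxZ p q (a : R) (M : 'M[R]_(p, q)) : (a *: M)^T = a *: M^T.
Proof. by apply/matrixP => i j; rewrite !mxE. Qed.

Lemma trmxN' p q (M : 'M[R]_(p, q)) : (- M)^T = - M^T.
Proof. by apply/matrixP => i j; rewrite !mxE. Qed.

Lemma trmxD' p q (M N : 'M[R]_(p, q)) : (M + N)^T = M^T + N^T.
Proof. by apply/matrixP => i j; rewrite !mxE. Qed.

Lemma wcase x y : w x y = 0 \/ 0 < w x y.
Proof. by have := wge0 x y; rewrite le_eqVlt => /orP [/eqP <-|]; [left|right]. Qed.

Lemma Lb_sym x y : (Lb y x)^T = Lb x y.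
Proof.
rewrite /Lb eq_sym; case: eqP => [->|_]; first by rewrite trmxZ trmx1.
rewrite trmxN' trmxZ wsym; case: (wcase x y) => [->|h].
  by rewrite !scale0r.
by rewrite sigsym // trmxK.
Qed.

Lemma CL_sym : CL^T = CL.
Proof.
rewrite /conn_laplacian tr_mxblock; apply: eq_mxblock => x y.
by have := Lb_sym x y; rewrite /Lb.
Qed.

Lemma energy k (V : 'M[R]_(nd, k)) :
  2 * \tr (V^T *m CL *m V) =
  \sum_x \sum_y w x y * \tr ((blk V x - sigma x y *m blk V y)^T *m
                             (blk V x - sigma x y *m blk V y)).
Proof.
set T := fun x => \tr ((blk V x)^T *m blk V x).
set S := fun x y => \tr ((blk V x)^T *m (sigma x y *m blk V y)).
have L1 : \tr (V^T *m CL *m V) = \sum_x (deg w x * T x - \sum_y w x y * S x y).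
  rewrite -mulmxA tr_blk raddf_sum /=; apply: eq_bigr => x _.
  rewrite CL_blk mulmx_sumr raddf_sum /= (bigD1 x) //= /Lb eqxx.
  rewrite -scalemxAl mul1mx -scalemxAr linearZ /=.
  rewrite [X in _ = _ - X](bigD1 x) //= w0 mul0r add0r; congr (_ + _).
  rewrite -sumrN; apply: eq_bigr => y /negbTE; rewrite eq_sym => ->.
  by rewrite mulNmx -scalemxAl mulmxN -scalemxAr raddfN /= mxtraceZ.
have L2 : forall x y, w x y * \tr ((blk V x - sigma x y *m blk V y)^T *m
                             (blk V x - sigma x y *m blk V y)) =
                      w x y * (T x - 2 * S x y + T y).
  move=> x y; case: (wcase x y) => [->|h]; first by rewrite !mul0r.
  congr (_ * _).
  rewrite trmxD' trmxN' mulmxDl mulmxDr mulmxDr !mulNmx !mulmxN !raddfD !raddfN /=.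
  have -> : \tr ((sigma x y *m blk V y)^T *m blk V x) = S x y.
    by rewrite -mxtrace_tr trmx_mul trmxK.
  have -> : \tr ((sigma x y *m blk V y)^T *m (sigma x y *m blk V y)) = T y.
    by rewrite trmx_mul mulmxA -(mulmxA (blk V y)^T) orth // mulmx1.
  rewrite -/(T x) -/(S x y); ring.
rewrite [RHS](eq_bigr (fun x => \sum_y w x y * (T x - 2 * S x y + T y)));
  last by move=> x _; apply: eq_bigr => y _; exact: L2.
rewrite L1.
have E1 : \sum_x \sum_y w x y * (T x - 2 * S x y + T y) =
   \sum_x \sum_y w x y * T x + \sum_x \sum_y w x y * T y - 2 * \sum_x \sum_y w x y * S x y.
  rewrite mulr_sumr -big_split -sumrB /=; apply: eq_bigr => x _.
  rewrite mulr_sumr -big_split -sumrB /=; apply: eq_bigr => y _; ring.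
rewrite E1 [X in _ + X - _]exchange_big /=.
have E2 : \sum_x \sum_y w y x * T x = \sum_x deg w x * T x.
  by apply: eq_bigr => x _; rewrite /deg mulr_suml; apply: eq_bigr => y _; rewrite wsym.
rewrite E2.
have E3 : \sum_x \sum_y w x y * T x = \sum_x deg w x * T x.
  by apply: eq_bigr => x _; rewrite /deg mulr_suml.
rewrite E3 sumrB mulrBr; ring.
Qed.

Lemma kato_blk k (P Q : 'M[R]_(d, k)) a :
  (Num.sqrt ((P^T *m P) a a) - Num.sqrt ((Q^T *m Q) a a)) ^+ 2 <=
  ((P - Q)^T *m (P - Q)) a a.
Proof.
have -> : ((P - Q)^T *m (P - Q)) a a =
    (P^T *m P) a a - 2 * (P^T *m Q) a a + (Q^T *m Q) a a.
  rewrite !trMtM_sum [(P^T *m Q) a a]mxE mulr_sumr -sumrB -big_split /=.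
  by apply: eq_bigr => b _; rewrite !mxE; ring.
apply: kato_scalar; rewrite ?trMtM_ge0 //.
have := @wCS R _ (fun _ => 1) (fun b => P b a) (fun b => Q b a) (fun _ => ler01).
rewrite !trMtM_sum mxE.
congr (_ <= _); first by congr (_ ^+ 2); apply: eq_bigr => b _; rewrite mxE mul1r.
by congr (_ * _); apply: eq_bigr => b _; rewrite mul1r.
Qed.

Definition fa (U : 'M[R]_(nd, d)) (a : 'I_d) (x : 'I_n) : R :=
  Num.sqrt (((blk U x)^T *m blk U x) a a).

Lemma kato_sum (U : 'M[R]_(nd, d)) :
  \sum_a En w (fa U a) (fa U a) <= 2 * \tr (U^T *m CL *m U).
Proof.
rewrite energy.
under eq_bigr do rewrite En_sq.
rewrite exchange_big /=; apply: ler_sum => x _.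
rewrite exchange_big /=; apply: ler_sum => y _.
rewrite /mxtrace mulr_sumr; apply: ler_sum => a _.
case: (wcase x y) => [->|h]; first by rewrite !mul0r.
apply: ler_wpM2l => //.
have := kato_blk (blk U x) (sigma x y *m blk U y) a.
by rewrite trmx_mul mulmxA -(mulmxA (blk U y)^T) orth // mulmx1.
Qed.

Lemma arith_final (f : 'I_d -> R) Q r : 0 <= r -> (forall a, 0 <= f a) ->
  Q <= \sum_a f a -> \sum_a f a ^+ 2 <= r * Q -> Q <= d%:R * r.
Proof.
move=> r0 f0 hQ hS.
have [rz|rpos] := eqVneq r 0.
  rewrite rz mul0r in hS; rewrite rz mulr0.
  have h0 : forall a, f a = 0.
    move=> a; have hs : \sum_a f a ^+ 2 = 0 by apply/le_anti; rewrite hS sumr_ge0 // => b _; rewrite sqr_ge0.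
    have h2 := psumr_eq0P (fun b _ => sqr_ge0 (f b)) hs.
    by apply/eqP; rewrite -sqrf_eq0 h2.
  by apply: (le_trans hQ); rewrite big1.
have rp : 0 < r by rewrite lt_neqAle eq_sym rpos r0.
have h1 : 2 * r * \sum_a f a <= \sum_a f a ^+ 2 + d%:R * r ^+ 2.
  have -> : d%:R * r ^+ 2 = \sum_(a < d) r ^+ 2 by rewrite sumr_const card_ord mulr_natl.
  rewrite mulr_sumr -big_split /=; apply: ler_sum => a _.
  have := sqr_ge0 (f a - r); nra.
nra.
Qed.

End Conn.

Section Killed.
Variables (R : realType) (n d : nat) (w : 'M[R]_n) (sigma : 'I_n -> 'I_n -> 'M[R]_d).
Hypothesis wsym : forall x y, w x y = w y x.
Hypothesis wge0 : forall x y, 0 <= w x y.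
Hypothesis w0 : forall x, w x x = 0.
Hypothesis orth : forall x y, 0 < w x y -> (sigma x y)^T *m sigma x y = 1%:M.
Hypothesis sigsym : forall x y, 0 < w x y -> sigma y x = (sigma x y)^T.
Hypothesis conn : forall x y, connect (adj w) x y.
Variables (i j : 'I_n).
Hypothesis ij : i != j.

Notation nd := (\sum_(x < n) d)%N.
Notation CL := (conn_laplacian w sigma).
Notation Lb := (Lb w sigma).
Notation blk := (@blk R n d _).

Definition Kb (x y : 'I_n) : 'M[R]_d :=
  if (x == j) || (y == j) then (x == y)%:R *: 1%:M else Lb x y.

Definition Km : 'M[R]_nd := \mxblock_(x < n, y < n) Kb x y.

Lemma Km_blk k (V : 'M[R]_(nd, k)) x :
  blk (Km *m V) x = if x == j then blk V j
                    else blk (CL *m V) x - Lb x j *m blk V j.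
Proof.
rewrite CL_blk /blk -{1}[V]submxcolK /Km mul_mxblock_mxrow mxcolK.
case: eqVneq => [->|xj].
  rewrite (bigD1 j) //= /Kb eqxx /= scale1r mul1mx big1 ?addr0 // => y yj.
  by rewrite eq_sym (negbTE yj) scale0r mul0mx.
rewrite [X in _ = X - _](bigD1 j) //= addrAC subrr add0r (bigD1 j) //= /Kb eqxx orbT.
rewrite (negbTE xj) scale0r mul0mx add0r; apply: eq_bigr => y yj.
by rewrite (negbTE yj).
Qed.

Lemma T_edge k (V : 'M[R]_(nd, k)) x y : 0 < w x y ->
  blk V x = sigma x y *m blk V y ->
  \tr ((blk V x)^T *m blk V x) = \tr ((blk V y)^T *m blk V y).
Proof.
by move=> h ->; rewrite trmx_mul mulmxA -(mulmxA (blk V y)^T) orth // mulmx1.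
Qed.

Lemma Km_inj (v : 'cV[R]_nd) : Km *m v = 0 -> v = 0.
Proof.
move=> hv.
have vj : blk v j = 0.
  by have := Km_blk v j; rewrite eqxx hv /blk submxcol0 => <-.
have CLv : forall x, x != j -> blk (CL *m v) x = 0.
  move=> x xj; have := Km_blk v x; rewrite (negbTE xj) hv /blk submxcol0 => /esym.
  by move/eqP; rewrite subr_eq0 => /eqP ->; rewrite -/(blk v j) vj mulmx0.
have E0 : \tr (v^T *m CL *m v) = 0.
  rewrite -mulmxA tr_blk raddf_sum big1 //= => x _.
  case: (eqVneq x j) => [->|xj]; first by rewrite vj trmx0 mul0mx mxtrace0.
  by rewrite CLv // mulmx0 mxtrace0.
have En0 := energy wsym wge0 w0 orth v; rewrite E0 mulr0 in En0.
have edge : forall x y, 0 < w x y -> blk v x = sigma x y *m blk v y.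
  move=> x y wxy; apply/eqP; rewrite -subr_eq0; apply/eqP; apply: tr_MtM_eq0.
  have h1 : forall x, \sum_y w x y * \tr ((blk v x - sigma x y *m blk v y)^T *m
                             (blk v x - sigma x y *m blk v y)) = 0.
    move=> x'; apply: (psumr_eq0P _ (esym En0)) => // z _.
    by apply: sumr_ge0 => y' _; rewrite mulr_ge0 // /mxtrace sumr_ge0 // => a _;
      rewrite trMtM_ge0.
  have h2 := psumr_eq0P (fun y' _ => mulr_ge0 (wge0 x y')
     (sumr_ge0 _ (fun a _ => trMtM_ge0 (blk v x - sigma x y' *m blk v y') a))) (h1 x).
  by move: (h2 y isT) => /eqP; rewrite mulf_eq0 gt_eqF //= => /eqP.
have T0 : forall x, \tr ((blk v x)^T *m blk v x) = 0.
  move=> x; apply: (@conn_ind R n w conn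
     (fun x => \tr ((blk v x)^T *m blk v x) = 0) j x) => [x' y' wxy <-|].
    by rewrite (T_edge wxy (edge _ _ wxy)).
  by rewrite vj trmx0 mul0mx mxtrace0.
rewrite -[v]submxcolK (@eq_mxcol _ _ (fun _ => d) _ _ (fun _ => 0)) ?mxcol0 // => x.
exact: tr_MtM_eq0 (T0 x).
Qed.

Lemma Km_unit : Km \in unitmx.
Proof.
rewrite -unitmx_tr -row_free_unit; apply: inj_row_free => u h.
have : Km *m u^T = 0 by rewrite -[Km *m u^T]trmxK trmx_mul trmxK h trmx0.
by move/Km_inj => /(congr1 trmx); rewrite trmxK trmx0.
Qed.

Variable h : 'I_n -> 'M[R]_d.
Hypothesis hj : h j = 1%:M.
Hypothesis hharm : forall x, x != j ->
  deg w x *: h x = \sum_y w x y *: (sigma x y *m h y).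

Definition Ecol : 'M[R]_(nd, d) :=
  \mxcol_(x < n) (if x == i then 1%:M else 0 : 'M[R]_d).
Definition Ncol : 'M[R]_(nd, d) :=
  \mxcol_(x < n) (if x == i then 1%:M else if x == j then - (h i)^T else 0 : 'M[R]_d).
Definition Hcol : 'M[R]_(nd, d) := \mxcol_(x < n) h x.
Definition Uk : 'M[R]_(nd, d) := invmx Km *m Ecol.

Lemma KU : Km *m Uk = Ecol.
Proof. by rewrite /Uk mulKVmx // Km_unit. Qed.

Lemma Uj : blk Uk j = 0.
Proof.
have := Km_blk Uk j; rewrite eqxx KU /blk /Ecol mxcolK eq_sym (negbTE ij) => <-.
by [].
Qed.

Lemma CLU_x x : x != j -> blk (CL *m Uk) x = if x == i then 1%:M else 0.
Proof.
move=> xj; have := Km_blk Uk x; rewrite (negbTE xj) KU Uj mulmx0 subr0 => <-.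
by rewrite /blk /Ecol mxcolK.
Qed.

Lemma CLH x : x != j -> blk (CL *m Hcol) x = 0.
Proof.
move=> xj; rewrite CL_blk.
have -> : \sum_y Lb x y *m blk Hcol y = deg w x *: h x - \sum_y w x y *: (sigma x y *m h y).
  rewrite (bigD1 x) //= [X in _ = _ - X](bigD1 x) //= w0 scale0r add0r.
  rewrite /Lb eqxx /blk /Hcol mxcolK -scalemxAl mul1mx; congr (_ + _).
  rewrite -sumrN; apply: eq_bigr => y /negbTE; rewrite eq_sym => ->.
  by rewrite mxcolK mulNmx -scalemxAl.
by rewrite hharm // subrr.
Qed.

Lemma green : blk (CL *m Uk) j = - (h i)^T.
Proof.
set K := blk (CL *m Uk) j.
have e : Uk^T *m (CL *m Hcol) = (CL *m Uk)^T *m Hcol.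
  by rewrite [in RHS]trmx_mul (CL_sym wsym wge0 sigsym) mulmxA.
have L0 : Uk^T *m (CL *m Hcol) = 0.
  rewrite tr_blk big1 // => x _.
  case: (eqVneq x j) => [->|xj]; first by rewrite Uj trmx0 mul0mx.
  by rewrite CLH // mulmx0.
have R0 : (CL *m Uk)^T *m Hcol = K^T + h i.
  rewrite tr_blk (bigD1 j) //= [X in _ + X](bigD1 i) //= ?ij // [X in _ + (_ + X)]big1 ?addr0.
    by rewrite /blk /Hcol !mxcolK -/(blk _ _) hj mulmx1 -/(blk _ i) (CLU_x ij) eqxx trmx1 mul1mx.
  move=> x /andP [xj xi]; rewrite CLU_x // (negbTE xi) trmx0 mul0mx //.
rewrite L0 R0 in e; move/eqP: e; rewrite eq_sym addr_eq0 => /eqP e.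
by rewrite -[K]trmxK e trmxN'.
Qed.

Lemma CLU_N : CL *m Uk = Ncol.
Proof.
rewrite -[CL *m Uk]submxcolK /Ncol; apply: eq_mxcol => x.
case: (eqVneq x j) => [->|xj].
  by rewrite eq_sym (negbTE ij); exact: green.
exact: CLU_x xj.
Qed.

Lemma Q_eq : \tr (Uk^T *m CL *m Uk) = \tr (blk Uk i).
Proof.
rewrite -mulmxA CLU_N tr_blk raddf_sum (bigD1 i) //= big1 ?addr0.
  by rewrite /blk /Ncol mxcolK eqxx mulmx1 mxtrace_tr.
move=> x xi; case: (eqVneq x j) => [->|xj]; first by rewrite Uj trmx0 mul0mx mxtrace0.
by rewrite /blk /Ncol mxcolK (negbTE xi) (negbTE xj) mulmx0 mxtrace0.
Qed.

Lemma Q_bound : \tr (Uk^T *m CL *m Uk) <= d%:R * eff_res w i j.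
Proof.
set Q := \tr (Uk^T *m CL *m Uk).
have [r0 _] := eff_res_bound wsym wge0 conn i j (fun _ => 0).
have faj : forall a, fa Uk a j = 0.
  by move=> a; rewrite /fa -/(blk Uk j) Uj trmx0 mul0mx mxE sqrtr0.
apply: (@arith_final R d (fun a => fa Uk a i)) => //.
- by move=> a; rewrite /fa sqrtr_ge0.
- rewrite /Q Q_eq /mxtrace; apply: ler_sum => a _.
  rewrite /fa -/(blk Uk i); apply: (le_trans (ler_norm _)).
  rewrite -sqrtr_sqr ler_sqrt ?trMtM_ge0 // trMtM_sum (bigD1 a) //= lerDl.
  by apply: sumr_ge0 => b _; rewrite sqr_ge0.
- have h1 : forall a, 2 * fa Uk a i ^+ 2 <= eff_res w i j * En w (fa Uk a) (fa Uk a).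
    move=> a; have [_ ] := eff_res_bound wsym wge0 conn i j (fa Uk a).
    by rewrite faj subr0.
  have h2 := kato_sum wsym wge0 w0 orth Uk.
  have h3 : 2 * \sum_a fa Uk a i ^+ 2 <= eff_res w i j * \sum_a En w (fa Uk a) (fa Uk a).
    by rewrite mulr_sumr mulr_sumr; apply: ler_sum => a _; exact: h1.
  have h4 := ler_wpM2l r0 h2.
  move: h3 h4; rewrite -/Q; set S := \sum_a _; set T := \sum_a _; nra.
Qed.

Lemma W_bound :
  \tr ((pinv CL *m Ncol)^T *m CL *m (pinv CL *m Ncol)) <= d%:R * eff_res w i j.
Proof.
rewrite -CLU_N mp_quad; [exact: Q_bound|exact: (CL_sym wsym wge0 sigsym)|exact: pinvP].
Qed.

End Killed.

Section Walks.
Variables (R : realType) (n d : nat) (w : 'M[R]_n) (sigma : 'I_n -> 'I_n -> 'M[R]_d).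

Definition tl t (p : {ffun 'I_t.+2 -> 'I_n}) : {ffun 'I_t.+1 -> 'I_n} :=
  [ffun k => p (lift ord0 k)].
Definition cns t (x : 'I_n) (q : {ffun 'I_t.+1 -> 'I_n}) : {ffun 'I_t.+2 -> 'I_n} :=
  [ffun k => if unlift ord0 k is Some k' then q k' else x].

Lemma tl_inord t (p : {ffun 'I_t.+2 -> 'I_n}) k : (k <= t)%N ->
  tl p (inord k) = p (inord k.+1).
Proof.
move=> kt; rewrite ffunE; congr (p _); apply: val_inj => /=.
by rewrite /bump /= add1n !inordK.
Qed.

Lemma inord0 t : (inord 0 : 'I_t.+1) = ord0.
Proof. by apply: val_inj; rewrite /= inordK. Qed.

Lemma tl_ord0 t (p : {ffun 'I_t.+2 -> 'I_n}) : tl p ord0 = p (inord 1).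
Proof. by rewrite -inord0 tl_inord. Qed.

Lemma tl_cns t x (q : {ffun 'I_t.+1 -> 'I_n}) : tl (cns x q) = q.
Proof. by apply/ffunP => k; rewrite !ffunE liftK. Qed.

Lemma cns_ord0 t x (q : {ffun 'I_t.+1 -> 'I_n}) : cns x q ord0 = x.
Proof. by rewrite ffunE unlift_none. Qed.

Lemma cns_tl t (p : {ffun 'I_t.+2 -> 'I_n}) : cns (p ord0) (tl p) = p.
Proof.
apply/ffunP => k; rewrite ffunE; case: unliftP => [k'|] ->; last by [].
by rewrite ffunE.
Qed.

Lemma walk_step_tl t (p : {ffun 'I_t.+2 -> 'I_n}) k : (k < t)%N ->
  walk_step p k.+1 = walk_step (tl p) k.
Proof.
by move=> kt; rewrite /walk_step !tl_inord // ltnW.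
Qed.

Lemma wp_tl t (p : {ffun 'I_t.+2 -> 'I_n}) :
  walk_prob w p = w (p ord0) (tl p ord0) / deg w (p ord0) * walk_prob w (tl p).
Proof.
rewrite /walk_prob big_ord_recl /=; congr (_ * _).
  by rewrite /walk_step /= inord0 tl_ord0.
by apply: eq_bigr => k _; rewrite /bump /= add1n !tl_inord // ltnW.
Qed.

Lemma foldr_eq_in (F G : nat -> 'M[R]_d) (s : seq nat) :
  (forall k, k \in s -> F k = G k) ->
  foldr (fun k acc => F k *m acc) 1%:M s = foldr (fun k acc => G k *m acc) 1%:M s.
Proof.
elim: s => [|a s IH] //= h; rewrite h ?mem_head // IH // => k ks.
by apply: h; rewrite in_cons ks orbT.
Qed.

Lemma ws_tl t (p : {ffun 'I_t.+2 -> 'I_n}) :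
  walk_sigma sigma p = sigma (p ord0) (tl p ord0) *m walk_sigma sigma (tl p).
Proof.
rewrite /walk_sigma /= inord0 tl_ord0; congr (_ *m _).
rewrite (iotaDl 1 0) foldr_map; apply: foldr_eq_in => k.
by rewrite mem_iota add0n => kt; rewrite /= add1n !tl_inord // ltnW.
Qed.

Lemma fp_tl t x j (p : {ffun 'I_t.+2 -> 'I_n}) : x != j ->
  first_passage x j p = (p ord0 == x) && first_passage (tl p ord0) j (tl p).
Proof.
move=> xj; rewrite /first_passage.
case: (eqVneq (p ord0) x) => [p0x|]; last by [].
rewrite eqxx /=.
have -> : tl p ord_max = p ord_max.
  by rewrite ffunE; congr (p _); apply: val_inj.
congr (_ && _); apply/forallP/forallP => H k.
  rewrite ffunE; apply/implyP => kt; have := H (lift ord0 k).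
  by rewrite /= /bump /= add1n ltnS kt.
case: (unliftP ord0 k) => [k'|] ->.
  by have := H k'; rewrite ffunE /= /bump /= add1n ltnS.
by rewrite p0x xj implybT.
Qed.

Lemma sum_fp_step (V : nmodType) t x j (F : {ffun 'I_t.+2 -> 'I_n} -> V) :
  x != j ->
  \sum_(p | first_passage x j p) F p =
  \sum_y \sum_(q : {ffun 'I_t.+1 -> 'I_n} | first_passage y j q) F (cns x q).
Proof.
move=> xj.
rewrite (reindex_onto (@cns t x) (@tl t)) => [|p]; last first.
  by rewrite fp_tl // => /andP [/eqP <- _]; rewrite cns_tl.
rewrite (eq_bigl (fun q : {ffun 'I_t.+1 -> 'I_n} => first_passage (q ord0) j q)) => [|q]; last first.
  by rewrite fp_tl // tl_cns cns_ord0 !eqxx andbT.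
rewrite (partition_big (fun q : {ffun 'I_t.+1 -> 'I_n} => q ord0) predT) //=.
apply: eq_bigr => y _; apply: eq_bigl => q.
case: (eqVneq (q ord0) y) => [->|ne]; first by rewrite andbT.
by rewrite andbF /first_passage (negbTE ne).
Qed.

Lemma fp0 x j (p : {ffun 'I_1 -> 'I_n}) :
  first_passage x j p = (p ord0 == x) && (p ord0 == j).
Proof.
rewrite /first_passage.
have -> : (ord_max : 'I_1) = ord0 by apply: val_inj.
congr (_ && _); rewrite andb_idr // => _; apply/forallP => k; apply/implyP => /=; by case: k => m /=.
Qed.

Lemma sum_fp0_eq (V : nmodType) j (F : {ffun 'I_1 -> 'I_n} -> V) :
  \sum_(p | first_passage j j p) F p = F [ffun => j].
Proof.
rewrite (big_pred1 [ffun => j]) // => p /=; rewrite fp0 andbb.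
apply/eqP/eqP => [p0|->]; last by rewrite ffunE.
by apply/ffunP => k; rewrite ord1 p0 ffunE.
Qed.

Lemma sum_fp0_neq (V : nmodType) x j (F : {ffun 'I_1 -> 'I_n} -> V) : x != j ->
  \sum_(p | first_passage x j p) F p = 0.
Proof.
move=> xj; rewrite big1 // => p; rewrite fp0 => /andP [/eqP p0 /eqP pj].
by move: xj; rewrite -p0 pj eqxx.
Qed.

Lemma sum_fpS_jj (V : nmodType) t j (F : {ffun 'I_t.+2 -> 'I_n} -> V) :
  \sum_(p | first_passage j j p) F p = 0.
Proof.
rewrite big1 // => p /and3P [/eqP p0 _ /forallP /(_ ord0)].
by rewrite /= p0 eqxx.
Qed.

Lemma wp0 (p : {ffun 'I_1 -> 'I_n}) : walk_prob w p = 1.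
Proof. by rewrite /walk_prob big_ord0. Qed.

Lemma ws0 (p : {ffun 'I_1 -> 'I_n}) : walk_sigma sigma p = 1%:M.
Proof. by []. Qed.

End Walks.

Section Omega.
Variables (R : realType) (n d : nat) (w : 'M[R]_n) (sigma : 'I_n -> 'I_n -> 'M[R]_d).
Hypothesis wge0 : forall x y, 0 <= w x y.
Hypothesis orth : forall x y, 0 < w x y -> (sigma x y)^T *m sigma x y = 1%:M.
Hypothesis conn : forall x y, connect (adj w) x y.

Definition pr (x j : 'I_n) t :=
  \sum_(p : {ffun 'I_t.+1 -> 'I_n} | first_passage x j p) walk_prob w p.

Lemma om_step t x j : x != j ->
  omega_term w sigma x j t.+1 =
  \sum_y (w x y / deg w x) *: (sigma x y *m omega_term w sigma y j t).
Proof.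
move=> xj; rewrite /omega_term sum_fp_step //; apply: eq_bigr => y _.
rewrite mulmx_sumr scaler_sumr; apply: eq_bigr => q /and3P [/eqP q0 _ _].
by rewrite wp_tl ws_tl tl_cns cns_ord0 q0 -scalemxAr scalerA.
Qed.

Lemma pr_step t x j : x != j ->
  pr x j t.+1 = \sum_y (w x y / deg w x) * pr y j t.
Proof.
move=> xj; rewrite /pr sum_fp_step //; apply: eq_bigr => y _.
rewrite mulr_sumr; apply: eq_bigr => q /and3P [/eqP q0 _ _].
by rewrite wp_tl tl_cns cns_ord0 q0.
Qed.

Lemma om0 x j : omega_term w sigma x j 0 = if x == j then 1%:M else 0.
Proof.
case: (eqVneq x j) => [->|xj]; last by rewrite /omega_term sum_fp0_neq.
by rewrite /omega_term sum_fp0_eq wp0 ws0 scale1r.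
Qed.

Lemma pr0 x j : pr x j 0 = if x == j then 1 else 0.
Proof.
case: (eqVneq x j) => [->|xj]; last by rewrite /pr sum_fp0_neq.
by rewrite /pr sum_fp0_eq wp0.
Qed.

Lemma omS_jj t j : omega_term w sigma j j t.+1 = 0.
Proof. by rewrite /omega_term sum_fpS_jj. Qed.

Lemma prS_jj t j : pr j j t.+1 = 0.
Proof. by rewrite /pr sum_fpS_jj. Qed.

Lemma deg_ge0 x : 0 <= deg w x.
Proof. by apply: sumr_ge0 => y _. Qed.

Lemma deg_gt0 x j : x != j -> 0 < deg w x.
Proof.
move=> xj; have /connectP [p pth jl] := conn x j.
case: p pth jl => [|y p] /=; first by move=> _ jx; rewrite jx eqxx in xj.
move=> /andP [xy _] _; rewrite /adj in xy.
apply: (lt_le_trans xy); rewrite /deg (bigD1 y) //= lerDl.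
by apply: sumr_ge0 => z _.
Qed.

Lemma P_sum x j : x != j -> \sum_y w x y / deg w x = 1.
Proof.
move=> xj; rewrite -mulr_suml divff //; exact: lt0r_neq0 (deg_gt0 xj).
Qed.

Lemma wp_ge0 t (p : {ffun 'I_t.+1 -> 'I_n}) : 0 <= walk_prob w p.
Proof.
by apply: prodr_ge0 => k _; rewrite divr_ge0 // deg_ge0.
Qed.

Lemma pr_ge0 x j t : 0 <= pr x j t.
Proof. by apply: sumr_ge0 => p _; exact: wp_ge0. Qed.

Lemma ws_orth t (p : {ffun 'I_t.+1 -> 'I_n}) : walk_prob w p != 0 ->
  (walk_sigma sigma p)^T *m walk_sigma sigma p = 1%:M.
Proof.
elim: t p => [|t IH] p; first by rewrite ws0 trmx1 mul1mx.
rewrite wp_tl ws_tl !mulf_eq0 !negb_or => /andP [/andP [wn _] wpn].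
have wpos : 0 < w (p ord0) (tl p ord0) by rewrite lt_neqAle eq_sym wn wge0.
rewrite trmx_mul mulmxA -(mulmxA _ _ (sigma _ _)) orth // mulmx1.
exact: IH.
Qed.

Lemma orth_entry (M : 'M[R]_d) a b : M^T *m M = 1%:M -> `|M a b| <= 1.
Proof.
move=> h; have : (M^T *m M) b b = 1 by rewrite h mxE eqxx.
rewrite mxE => hs.
have : M a b ^+ 2 <= 1.
  rewrite -hs (bigD1 a) //= mxE -expr2 lerDl.
  by apply: sumr_ge0 => c _; rewrite mxE -expr2 sqr_ge0.
rewrite -real_normK ?num_real // => h2.
by rewrite -(expr_le1 (n:=2)) // normr_ge0.
Qed.

Lemma om_bound x j t a b : `|omega_term w sigma x j t a b| <= pr x j t.
Proof.
rewrite /omega_term summxE; apply: (le_trans (ler_norm_sum _ _ _)).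
apply: ler_sum => p _; rewrite mxE normrM ger0_norm ?wp_ge0 //.
have [->|pn] := eqVneq (walk_prob w p) 0; first by rewrite mul0r.
by rewrite ler_piMr ?wp_ge0 // orth_entry // ws_orth.
Qed.

Lemma pr_series x j N : \sum_(0 <= t < N) pr x j t <= 1.
Proof.
elim: N x => [|N IH] x; first by rewrite big_geq.
rewrite big_nat_recl //.
case: (eqVneq x j) => [->|xj].
  by rewrite pr0 eqxx big1 ?addr0 // => t _; rewrite prS_jj.
rewrite pr0 (negbTE xj) add0r.
under eq_bigr do rewrite pr_step //.
rewrite exchange_big /= -(P_sum xj); apply: ler_sum => y _.
rewrite -mulr_sumr; apply: ler_piMr; last exact: IH.
by rewrite divr_ge0 // deg_ge0.
Qed.

Lemma om_cvg x j a b : cvgn (series (fun t => omega_term w sigma x j t a b)).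
Proof.
apply: normed_cvg.
apply: (@series_le_cvg R _ (pr x j)) => //.
- by move=> t; exact: normr_ge0.
- by move=> t; exact: pr_ge0.
- by move=> t; exact: om_bound.
apply: nondecreasing_is_cvgn.
  apply/nondecreasing_seqP => N; rewrite /series /= big_nat_recr //= lerDl.
  exact: pr_ge0.
by exists 1 => _ [N _ <-]; exact: pr_series.
Qed.

Definition hl x j a b := limn (series (fun t => omega_term w sigma x j t a b)).

Lemma om_entry_step x j t a b : x != j ->
  omega_term w sigma x j t.+1 a b =
  \sum_y (w x y / deg w x) * \sum_c sigma x y a c * omega_term w sigma y j t c b.
Proof.
move=> xj; rewrite om_step // summxE; apply: eq_bigr => y _.
by rewrite mxE mxE.
Qed.

Lemma hl_step x j a b : x != j ->
  hl x j a b = \sum_y (w x y / deg w x) * \sum_c sigma x y a c * hl y j c b.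
Proof.
move=> xj; rewrite /hl; apply: cvg_lim => //.
rewrite -cvg_shiftS.
have -> : (fun N => series (fun t => omega_term w sigma x j t a b) N.+1) =
  (fun N => \sum_y (w x y / deg w x) * \sum_c sigma x y a c *
               series (fun t => omega_term w sigma y j t c b) N).
  apply/funext => N; rewrite /series /= big_nat_recl // om0 (negbTE xj) mxE add0r.
  under eq_bigr do rewrite om_entry_step //.
  rewrite exchange_big /=; apply: eq_bigr => y _.
  rewrite -mulr_sumr; congr (_ * _).
  rewrite exchange_big /=; apply: eq_bigr => c _.
  by rewrite -mulr_sumr.
apply: cvg_big => [|y _]; first exact: add_continuous.
apply: cvgMl_tmp; apply: cvg_big => [|c _]; first exact: add_continuous.
apply: cvgMl_tmp; exact: om_cvg.
Qed.

Lemma Omega_harm x j : x != j ->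
  deg w x *: Omega0 w sigma x j = \sum_y w x y *: (sigma x y *m Omega0 w sigma y j).
Proof.
move=> xj; apply/matrixP => a b.
rewrite mxE summxE /Omega0 mxE -/(hl x j a b) hl_step // mulr_sumr.
apply: eq_bigr => y _; rewrite !mxE mulrA mulrCA divff ?mulr1.
  by congr (_ * _); apply: eq_bigr => c _; rewrite mxE.
exact: lt0r_neq0 (deg_gt0 xj).
Qed.

Lemma Omega_jj j : Omega0 w sigma j j = 1%:M.
Proof.
apply/matrixP => a b; rewrite /Omega0 mxE; apply: cvg_lim => //.
rewrite -cvg_shiftS.
have -> : (fun N => series (fun t => omega_term w sigma j j t a b) N.+1) =
  (fun N => (1%:M : 'M[R]_d) a b).
  apply/funext => N; rewrite /series /= big_nat_recl // om0 eqxx big1 ?addr0 //.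
  by move=> t _; rewrite omS_jj mxE.
exact: cvg_cst.
Qed.

End Omega.

Unset Implicit Arguments. Set Strict Implicit.

Lemma eff_res_sym (R : realType) (n : nat) (w : 'M[R]_n) i j :
  eff_res w j i = eff_res w i j.
Proof.
rewrite /eff_res /=.
have -> : (delta_mx j ord0 - delta_mx i ord0 : 'cV[R]_n) =
          - (delta_mx i ord0 - delta_mx j ord0) by rewrite opprB.
by rewrite trmxN' mulNmx mulmxN mulNmx opprK.
Qed.

Theorem proposition6p12 (R : realType) (n d : nat) (w : 'M[R]_n)
  (sigma : 'I_n -> 'I_n -> 'M[R]_d) :
  (0 < d)%N -> connection_graph w sigma ->
  forall i j : 'I_n, i != j -> conn_eff_res w sigma i j <= eff_res w i j.
Proof.
move=> d0 [wsym [wge0 [w0 [conn [orth sigsym]]]]] i j ij.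
have B1 := @W_bound R n d w sigma wsym wge0 w0 orth sigsym conn i j ij
  (fun x => Omega0 w sigma x j) (Omega_jj w sigma j)
  (fun x xj => Omega_harm wge0 orth conn xj).
have ji : j != i by rewrite eq_sym.
have B2 := @W_bound R n d w sigma wsym wge0 w0 orth sigsym conn j i ji
  (fun x => Omega0 w sigma x i) (Omega_jj w sigma i)
  (fun x xi => Omega_harm wge0 orth conn xi).
rewrite eff_res_sym in B2.
have E1 : Nmat w sigma i j = Ncol i j (fun x => Omega0 w sigma x j) := erefl.
have E2 : Nmat w sigma j i = Ncol j i (fun x => Omega0 w sigma x i) := erefl.
rewrite /conn_eff_res /Wmat E1 E2 mxtraceD.
have dpos : 0 < d%:R :> R by rewrite ltr0n.
apply: (le_trans (ler_wpM2l _ (lerD B1 B2))).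
  by rewrite invr_ge0 mulr_ge0 // ltW.
set r := eff_res w i j.
have -> : (2 * d%:R)^-1 * (d%:R * r + d%:R * r) = r :> R.
  by field; rewrite gt_eqF.
by [].
Qed.
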